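(* Let $\mathbf L$ be a locally compact non-discrete non-Archimedean field. For each ultrametric space $(X,\rho)$ there exist a (topological) embedding $f:X\to B(c_0(\mathbf L,A_X),0,1)$ and a uniformly continuous embedding of $X$ into $c_0(\mathbf L,A_X)$, where $\mathrm{card}(A_X)=w(X)$ is the topological weight of $X$.
   Context: For a set $A$, $c_0(\mathbf L,A)$ is the Banach space of families $x=(x_a)_{a\in A}$ in $\mathbf L$ such that for every $b>0$ the set $\{a:|x_a|\ge b\}$ is finite, with norm $\|x\|=\sup_a|x_a|$; $B(c_0(\mathbf L,A),0,1)$ is its closed unit ball. An ultrametric space is a metric space whose metric satisfies $\rho(x,y)\le\max(\rho(x,z),\rho(z,y))$. *)

(* Defs.v *)
From HB Require Import structures.
From mathcomp Require Import all_boot all_order all_algebra.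
From mathcomp Require Import boolp classical_sets functions cardinality reals.
Set Implicit Arguments. Unset Strict Implicit. Unset Printing Implicit Defensive.
Import Order.TTheory GRing.Theory Num.Theory.
Local Open Scope classical_set_scope.
Local Open Scope ring_scope.

Section MetricNotions.
Variables (R : realType) (T : Type) (d : T -> T -> R).

Definition mopen (U : set T) : Prop :=
  forall x, U x -> exists e : R, 0 < e /\ forall y, d x y < e -> U y.

Definition mcompact (C : set T) : Prop :=
  forall F : set (set T), (forall U, F U -> mopen U) ->
    C `<=` \bigcup_(U in F) U ->
    exists G : set (set T), [/\ G `<=` F, finite_set G & C `<=` \bigcup_(U in G) U].

Definition mlocally_compact : Prop :=
  forall x, exists C : set T, mcompact C /\
    exists e : R, 0 < e /\ [set y | d x y < e] `<=` C.

Definition mdiscrete : Prop := forall x, mopen [set x].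

Definition mbase (B : set (set T)) : Prop :=
  (forall b, B b -> mopen b) /\
  (forall U, mopen U -> forall x, U x -> exists b, [/\ B b, b x & b `<=` U]).

(* card A = w(T): A has the cardinality of some base, and is at most the
   cardinality of every base (so it is the minimum). *)
Definition weight_card (A : Type) : Prop :=
  (exists B, mbase B /\ card_eq [set: A] B) /\
  (forall B, mbase B -> card_le [set: A] B).

Definition ultrametric : Prop :=
  [/\ forall x y, 0 <= d x y,
      forall x y, d x y = 0 <-> x = y,
      forall x y, d x y = d y x &
      forall x y z, d x y <= Num.max (d x z) (d z y)].
End MetricNotions.

Definition membedding (R : realType) (X Y : Type) (dX : X -> X -> R)
    (dY : Y -> Y -> R) (f : X -> Y) : Prop :=
  [/\ injective f,
      forall V, mopen dY V -> mopen dX (f @^-1` V) &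
      forall U, mopen dX U -> exists V, mopen dY V /\ f @` U = V `&` range f].

Definition unif_continuous (R : realType) (X Y : Type) (dX : X -> X -> R)
    (dY : Y -> Y -> R) (f : X -> Y) : Prop :=
  forall e : R, 0 < e -> exists del : R, 0 < del /\
    forall x y, dX x y < del -> dY (f x) (f y) < e.

Definition nonarch_abs (R : realType) (L : fieldType) (v : L -> R) : Prop :=
  [/\ forall x, 0 <= v x,
      forall x, v x = 0 <-> x = 0,
      forall x y, v (x * y) = v x * v y &
      forall x y, v (x + y) <= Num.max (v x) (v y)].

Definition absdist (R : realType) (L : fieldType) (v : L -> R) (x y : L) : R :=
  v (x - y).

Definition is_c0 (R : realType) (L : fieldType) (v : L -> R) (A : Type)
    (x : A -> L) : Prop :=
  forall b : R, 0 < b -> finite_set [set a | b <= v (x a)].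

Definition c0 (R : realType) (L : fieldType) (v : L -> R) (A : Type) : Type :=
  {x : A -> L | is_c0 v x}.

Definition c0norm (R : realType) (L : fieldType) (v : L -> R) (A : Type)
    (x : c0 v A) : R :=
  sup [set v (proj1_sig x a) | a in [set: A]].

Definition c0dist (R : realType) (L : fieldType) (v : L -> R) (A : Type)
    (x y : c0 v A) : R :=
  sup [set v (proj1_sig x a - proj1_sig y a) | a in [set: A]].

(* Main.v *)
Require Import Defs.
From mathcomp Require Import all_boot all_order all_algebra.
From mathcomp Require Import boolp classical_sets functions cardinality reals.
From mathcomp Require Import ring lra.
Import Order.TTheory GRing.Theory Num.Theory.
Local Open Scope classical_set_scope.
Local Open Scope ring_scope.
Set Implicit Arguments. Unset Strict Implicit. Unset Printing Implicit Defensive.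


Section Val.
Context (R : realType) (L : fieldType) (v : L -> R).
Hypothesis hv : nonarch_abs v.

Lemma v_ge0 x : 0 <= v x. Proof. by case: hv. Qed.
Lemma v0 : v 0 = 0. Proof. by case: hv => _ h _ _; apply h. Qed.
Lemma v_eq0 x : v x = 0 -> x = 0. Proof. by case: hv => _ h _ _; apply h. Qed.
Lemma vM x y : v (x * y) = v x * v y. Proof. by case: hv. Qed.
Lemma vD x y : v (x + y) <= Num.max (v x) (v y). Proof. by case: hv. Qed.
Lemma v1 : v 1 = 1.
Proof.
have h := vM 1 1; rewrite mulr1 in h.
have h0 : v 1 != 0 by apply/eqP => /v_eq0/eqP; rewrite oner_eq0.
by apply: (mulIf h0); rewrite mul1r -h.
Qed.
Lemma vN1 : v (-1) = 1.
Proof.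
have h := vM (-1) (-1); rewrite mulrNN mulr1 v1 in h.
have hge := v_ge0 (-1).
have : (v (-1) - 1) * (v (-1) + 1) = 0 by rewrite mulrDr !mulrBl -h; ring.
move/eqP; rewrite mulf_eq0 => /orP[/eqP|/eqP]; first by move/eqP; rewrite subr_eq0 => /eqP.
move=> e; have : 0 < v (-1) + 1 by rewrite ltr_wpDl.
by rewrite e ltxx.
Qed.
Lemma vN x : v (- x) = v x.
Proof. by rewrite -mulN1r vM vN1 mul1r. Qed.
Lemma vB x y : v (x - y) = v (y - x).
Proof. by rewrite -vN opprB. Qed.
Lemma vX x n : v (x ^+ n) = v x ^+ n.
Proof. by elim: n => [|n IH]; rewrite ?expr0 ?v1 // !exprS vM IH. Qed.
Lemma vD_le x y c : v x <= c -> v y <= c -> v (x + y) <= c.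
Proof. by move=> hx hy; apply: le_trans (vD x y) _; rewrite ge_max hx hy. Qed.
Lemma vsum_le (I : Type) (s : seq I) (P : pred I) (F : I -> L) c :
  0 <= c -> (forall i, P i -> v (F i) <= c) -> v (\sum_(i <- s | P i) F i) <= c.
Proof.
move=> c0 hF; apply: (big_ind (fun x => v x <= c)); first by rewrite v0.
- by move=> x y; apply: vD_le.
- exact: hF.
Qed.
Lemma vD_gt a r : v r < v a -> v a <= v (a + r).
Proof.
move=> h; have := vD (a + r) (- r); rewrite addrK vN.
rewrite le_max => /orP[//|h2]; by move: (lt_le_trans h h2); rewrite ltxx.
Qed.
End Val.


Section Pow.
Context (R : realType) (t : R).
Hypothesis t0 : 0 < t.
Hypothesis t1 : t < 1.

Lemma tpos n : 0 < t ^+ n. Proof. exact: exprn_gt0. Qed.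
Lemma tle m n : (m <= n)%N -> t ^+ n <= t ^+ m.
Proof. by rewrite ler_iXn2l. Qed.
Lemma tlt m n : (m < n)%N -> t ^+ n < t ^+ m.
Proof. by rewrite ltr_iXn2l. Qed.
Lemma tle_inv m n : t ^+ m <= t ^+ n -> (n <= m)%N.
Proof. by rewrite ler_iXn2l. Qed.
Lemma bern (h : R) n : 0 <= h -> 1 + n%:R * h <= (1 + h) ^+ n.
Proof.
move=> h0; elim: n => [|n IH]; first by rewrite mul0r addr0 expr0.
rewrite exprS; apply: le_trans (_ : (1 + h) * (1 + n%:R * h) <= _).
  rewrite -natr1; have : 0 <= n%:R * h * h by rewrite mulr_ge0 ?mulr_ge0.
  by rewrite mulrDl mulrDr !mul1r; lra.
by rewrite ler_wpM2l // addr_ge0.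
Qed.
Lemma tsmall e : 0 < e -> exists n, t ^+ n < e.
Proof.
move=> e0; pose h := t^-1 - 1.
have h0 : 0 < h by rewrite /h subr_gt0 invf_gt1.
pose n := Num.Def.archi_bound (e * h)^-1.
have hn : (e * h)^-1 < n%:R by apply: archi_boundP; rewrite invr_ge0 mulr_ge0 // ltW.
exists n.
have ht : t = (1 + h)^-1 by rewrite /h addrC subrK invrK.
rewrite ht exprVn.
have hb := @bern h n (ltW h0).
have pos : 0 < (1 + h) ^+ n by rewrite exprn_gt0 // ltr_wpDr ?ltW.
have hnh : e^-1 < n%:R * h.
  by rewrite -ltr_pdivrMr // -invfM.
have : e^-1 < (1 + h) ^+ n by lra.
by rewrite -[e in _ < e]invrK ltf_pV2 // posrE invr_gt0.
Qed.
End Pow.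


Section Ultra.
Context (R : realType) (X : Type) (rho : X -> X -> R).
Hypothesis hu : ultrametric rho.

Lemma rho_ge0 x y : 0 <= rho x y. Proof. by case: hu. Qed.
Lemma rho_sym x y : rho x y = rho y x. Proof. by case: hu. Qed.
Lemma rho_xx x : rho x x = 0. Proof. by case: hu => _ h _ _; apply h. Qed.
Lemma rho_eq0 x y : rho x y = 0 -> x = y. Proof. by case: hu => _ h _ _; apply h. Qed.
Lemma rho_tri x y z : rho x y <= Num.max (rho x z) (rho z y). Proof. by case: hu. Qed.

Definition ball (c : X) (r : R) : set X := [set z | rho c z < r].

Lemma ball_sep c r x y : ball c r x -> rho x y < r -> ball c r y.
Proof. rewrite /ball /= => h1 h2; apply: le_lt_trans (rho_tri c y x) _; by rewrite gt_max h1 h2. Qed.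

Lemma ball_recenter c x r : ball c r x -> ball c r = ball x r.
Proof.
move=> h; apply/seteqP; split => z /= hz.
- by apply: le_lt_trans (rho_tri x z c) _; rewrite gt_max rho_sym h hz.
- exact: ball_sep hz.
Qed.

Lemma ball_mono c r s : r <= s -> ball c r `<=` ball c s.
Proof. by move=> rs z /= h; apply: lt_le_trans rs. Qed.

Lemma ball_center c r : 0 < r -> ball c r c.
Proof. by rewrite /ball /= rho_xx. Qed.
Lemma ball_open c r : mopen rho (ball c r).
Proof. by move=> z hz; exists r; split; [apply: le_lt_trans hz; exact: rho_ge0 | move=> y; apply: ball_sep]. Qed.
End Ultra.


Section Coord.
Context (R : realType) (L : fieldType) (v : L -> R).
Hypothesis hv : nonarch_abs v.
Context (p : L).
Let t := v p.
Hypothesis t0 : 0 < t.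
Hypothesis t1 : t < 1.
Context (X : Type) (rho : X -> X -> R).
Hypothesis hu : ultrametric rho.
Context (Bm : set (set X)).
Hypothesis hB : mbase rho Bm.
Context (x0 : X).

Lemma ctr_ex (b : set X) : exists z, (exists y, b y) -> b z.
Proof.
by case: (pselect (exists y, b y)) => [[y hy]|hn]; [exists y | exists x0].
Qed.
Definition ctr (b : set X) : X := projT1 (cid (ctr_ex b)).
Lemma ctrP b y : b y -> b (ctr b).
Proof. by move=> hy; apply: (projT2 (cid (ctr_ex b))); exists y. Qed.

Definition asg (C : set X) : set X :=
  xget set0 (fun b => [/\ Bm b, (exists z, b z) & b `<=` C]).

Lemma asgP c n : [/\ Bm (asg (ball rho c (t ^+ n))),
  (exists z, asg (ball rho c (t ^+ n)) z) & asg (ball rho c (t ^+ n)) `<=` ball rho c (t ^+ n)].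
Proof.
apply: (@xgetPex _ set0 (fun b => [/\ Bm b, (exists z, b z) & b `<=` ball rho c (t ^+ n)])).

case: hB => _ /(_ (ball rho c (t ^+ n)) (@ball_open _ _ _ hu c (t ^+ n)) c).
case=> [|b [Bb bc bsub]]; first by apply: (ball_center hu); rewrite exprn_gt0.
by exists b; split => //; exists c.
Qed.

Definition Mb (b : set X) : nat := xget 0%N (fun M => ball rho (ctr b) (t ^+ M) `<=` b).

Lemma MbP b : Bm b -> (exists y, b y) -> ball rho (ctr b) (t ^+ Mb b) `<=` b.
Proof.
move=> Bb [y hy].
apply: (@xgetPex _ 0%N (fun M => ball rho (ctr b) (t ^+ M) `<=` b)).
have cb := ctrP hy.
case: hB => /(_ b Bb) /(_ _ cb) [e [e0 he]] _.
have [n hn] := tsmall t0 t1 e0.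
by exists n => z /= hz; apply: he; apply: lt_trans hn.
Qed.

Definition Sb (b : set X) (n : nat) : Prop :=
  asg (ball rho (ctr b) (t ^+ n)) = b /\
  forall k, (k < n)%N -> ball rho (ctr b) (t ^+ k) <> ball rho (ctr b) (t ^+ n).

Definition term (x : X) (b : set X) (n : nat) : L :=
  if `[< Sb b n /\ ball rho (ctr b) (t ^+ n) x >] then p ^+ n else 0.

Definition coord (x : X) (b : set X) : L := \sum_(n < (Mb b).+1) term x b n.

Lemma term_le x b n : v (term x b n) <= t ^+ n.
Proof.
rewrite /term; case: ifP => _; first by rewrite (vX hv).
by rewrite (v0 hv) exprn_ge0 // ltW.
Qed.

Lemma tdiff_le x y b n : v (term x b n - term y b n) <= t ^+ n.
Proof. by apply: (vD_le hv); rewrite ?(vN hv) term_le. Qed.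

Lemma coord_le1 x b : v (coord x b) <= 1.
Proof.
apply: (vsum_le hv) => // i _; apply: le_trans (term_le _ _ _) _.
by rewrite exprn_ile1 // ltW.
Qed.

Lemma coord_small x y N b : rho x y < t ^+ N ->
  v (coord x b - coord y b) <= t ^+ N.+1.
Proof.
move=> hxy; rewrite /coord -sumrB; apply: (vsum_le hv); first by rewrite exprn_ge0 // ltW.
move=> [n hn] _ /=.
have key : t ^+ n <= rho x y -> t ^+ n <= t ^+ N.+1.
  move=> h; have : t ^+ n < t ^+ N by apply: le_lt_trans hxy.
  by rewrite ltr_iXn2l // => /(tle t0 t1).
rewrite /term.
have [hx|hx] := asboolP (Sb b n /\ ball rho (ctr b) (t ^+ n) x);
have [hy|hy] := asboolP (Sb b n /\ ball rho (ctr b) (t ^+ n) y).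
- by rewrite subrr (v0 hv) exprn_ge0 // ltW.
- rewrite subr0 (vX hv); apply: key; rewrite leNgt; apply/negP => h.
  by apply: hy; split; [case: hx | apply: (ball_sep hu) h; case: hx].
- rewrite sub0r (vN hv) (vX hv); apply: key; rewrite leNgt; apply/negP => h.
  case: hy => Sy By; apply: hx; split => //; apply: (ball_sep hu By).
  by rewrite rho_sym.
- by rewrite subrr (v0 hv) exprn_ge0 // ltW.
Qed.


Lemma coord_sep x y N : t ^+ N <= rho x y ->
  exists b, Bm b /\ t ^+ N <= v (coord x b - coord y b).
Proof.
move=> hN.
have ex : exists n, (fun n => t ^+ n <= rho x y) n by exists N.
case: (ex_minnP ex) => m Pm minm.
have mN : (m <= N)%N by apply: minm.
have ltk : forall k, (k < m)%N -> rho x y < t ^+ k.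
  by move=> k km; rewrite ltNge; apply/negP => /minm; rewrite leqNgt km.
have [Bb [z bz] bC] := asgP x m.
set b := asg (ball rho x (t ^+ m)) in Bb bz bC *.
have cb := ctrP bz.
set c := ctr b in cb *.
have cC := bC _ cb.
have rec : forall k, (k <= m)%N -> ball rho c (t ^+ k) = ball rho x (t ^+ k).
  move=> k km; apply/esym/(ball_recenter hu).
  by apply: (ball_mono (tle t0 t1 km)).
have nym : ~ ball rho x (t ^+ m) y by rewrite /ball /= ltNge Pm.
have Sm : Sb b m.
  split; first by rewrite /c rec.
  move=> k km; rewrite /c (rec k (ltnW km)) (rec m (leqnn m)) => E.
  by apply: nym; rewrite -E /ball /=; apply: ltk.
have mM : (m < (Mb b).+1)%N.
  rewrite ltnS leqNgt; apply/negP => Mm.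
  apply: (Sm.2 _ Mm); apply/seteqP; split.
  - apply: subset_trans (MbP Bb (ex_intro _ z bz)) _.
    by rewrite /c rec.
  - by apply: ball_mono; exact: (tle t0 t1 (ltnW Mm)).
exists b; split => //.
rewrite /coord -sumrB (bigD1 (Ordinal mM)) //=.
have xin : ball rho c (t ^+ m) x by rewrite rec //; apply: (ball_center hu); rewrite exprn_gt0.
have -> : term x b m = p ^+ m by rewrite /term asboolT.
have -> : term y b m = 0.
  rewrite /term asboolF //; case=> _ hy; apply: nym; rewrite -rec //.
rewrite subr0; apply: le_trans (_ : t ^+ m <= _); first exact: (tle t0 t1 mN).
rewrite -(vX hv); apply: (vD_gt hv); rewrite (vX hv).
apply: le_lt_trans (_ : t ^+ m.+1 < _); last exact: (tlt t0 t1 (ltnSn m)).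
apply: (vsum_le hv); first by rewrite exprn_ge0 // ltW.
move=> [i hi] /= him.
have [im|mi] := ltnP i m.
- have bx : ball rho c (t ^+ i) x by rewrite (rec i (ltnW im)); apply: (ball_center hu); rewrite exprn_gt0.
  have by_ : ball rho c (t ^+ i) y by rewrite (rec i (ltnW im)); apply: ltk.
  rewrite /term; case: asboolP => h1; case: asboolP => h2.
  + by rewrite subrr (v0 hv) exprn_ge0 // ltW.
  + by exfalso; apply: h2; split => //; case: h1.
  + by exfalso; apply: h1; split => //; case: h2.
  + by rewrite subrr (v0 hv) exprn_ge0 // ltW.
- apply: le_trans (tdiff_le _ _ _ _) _; apply: (tle t0 t1).
  by rewrite ltn_neqAle eq_sym mi andbT.
Qed.


Lemma coord_c0 x : is_c0 v (fun a : set_type Bm => coord x (val a)).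
Proof.
move=> be be0; have [K hK] := tsmall t0 t1 be0.
have asgB n : asg (ball rho x (t ^+ n)) \in Bm.
  by case: (asgP x n) => ? _ _; apply: mem_set.
pose g n : set_type Bm := exist _ (asg (ball rho x (t ^+ n))) (asgB n).
apply: (@sub_finite_set _ _ (g @` `I_K)); last exact/finite_image/finite_II.
move=> [b hb] /= hbe.
pose P n := `[< Sb b n /\ ball rho (ctr b) (t ^+ n) x >].
have exP : exists n, P n.
  apply/not_existsP => hn; move: hbe; rewrite /coord big1.
    by rewrite (v0 hv) leNgt be0.
  by move=> i _; rewrite /term; case: ifP => // hi; case: (hn i).
case: (ex_minnP exP) => n0 Pn0 minn0.
have hle : v (coord x b) <= t ^+ n0.
  apply: (vsum_le hv); first by rewrite exprn_ge0 // ltW.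
  move=> [i hi] _ /=; rewrite /term; case: ifP => hPi.
  - by rewrite (vX hv); apply: (tle t0 t1); apply: minn0; rewrite /P hPi.
  - by rewrite (v0 hv) exprn_ge0 // ltW.
have n0K : (n0 < K)%N.
  by rewrite -(ltr_iXn2l t0 t1); apply: lt_le_trans hK (le_trans hbe hle).
exists n0 => //; apply: val_inj => /=.
move/asboolP: Pn0 => [[Sa _] bx].
by rewrite -(ball_recenter hu bx).
Qed.

End Coord.


Section C0.
Context (R : realType) (L : fieldType) (v : L -> R).
Hypothesis hv : nonarch_abs v.
Context (A : Type).

Lemma sup_img_le (f : A -> R) c : 0 <= c -> (forall a, f a <= c) ->
  sup [set f a | a in [set: A]] <= c.
Proof.
move=> c0 hf; case: (pselect (exists a : A, True)) => [[a _]|nA].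
- apply: ge_sup; first by exists (f a), a.
  by move=> _ [a' _ <-]; apply: hf.
- have E : [set f a | a in [set: A]] = set0.
    by apply/seteqP; split => // y [a _ _]; apply: nA; exists a.
  by rewrite E sup0.
Qed.



Lemma maxseq_ge (s : seq R) r : r \in s -> r <= \big[Num.max/1]_(x <- s) x.
Proof.
elim: s => // y s IH; rewrite inE big_cons => /orP[/eqP ->|/IH h].
- by rewrite le_max lexx.
- by rewrite le_max h orbT.
Qed.
Lemma maxseq_ge1 (s : seq R) : 1 <= \big[Num.max/1]_(x <- s) x.
Proof. by elim: s => [|y s IH]; rewrite ?big_nil // big_cons le_max IH orbT. Qed.

Lemma c0_bound (w : c0 v A) : exists M, 0 <= M /\ forall a, v (proj1_sig w a) <= M.
Proof.
case: w => w hw /=.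
have F := hw 1 ltr01.
have S := finite_image (fun a => v (w a)) F.
case/finite_seqP: S => s hs.
exists (\big[Num.max/1]_(x <- s) x); split; first exact: le_trans ler01 (maxseq_ge1 s).
move=> a; case: (lerP 1 (v (w a))) => h.
- apply: maxseq_ge; have : [set v (w a) | a in [set a | 1 <= v (w a)]] (v (w a)) by exists a.
  by rewrite hs.
- exact: le_trans (ltW h) (maxseq_ge1 s).
Qed.

Lemma c0d_ge (w w' : c0 v A) a :
  v (proj1_sig w a - proj1_sig w' a) <= c0dist w w'.
Proof.
have [M1 [_ h1]] := c0_bound w; have [M2 [_ h2]] := c0_bound w'.
apply: ub_le_sup; last by exists a.
exists (Num.max M1 M2) => _ [a' _ <-].
by apply: (vD_le hv); rewrite ?(vN hv) le_max ?h1 ?h2 ?orbT.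
Qed.

Lemma c0d_le (w w' : c0 v A) c : 0 <= c ->
  (forall a, v (proj1_sig w a - proj1_sig w' a) <= c) -> c0dist w w' <= c.
Proof. exact: sup_img_le. Qed.

Lemma c0d_ge0 (w w' : c0 v A) : 0 <= c0dist w w'.
Proof.
case: (pselect (exists a : A, True)) => [[a _]|nA].
- exact: le_trans (v_ge0 hv _) (c0d_ge w w' a).
- rewrite /c0dist.
  have E : [set v (proj1_sig w a - proj1_sig w' a) | a in [set: A]] = set0.
    by apply/seteqP; split => // y [a _ _]; apply: nA; exists a.
  by rewrite E sup0.
Qed.

Lemma c0d_xx (w : c0 v A) : c0dist w w = 0.
Proof.
apply/le_anti; rewrite c0d_ge0 andbT.
by apply: c0d_le => // a; rewrite subrr (v0 hv).
Qed.

Lemma c0d_ultra (x y z : c0 v A) :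
  c0dist x z <= Num.max (c0dist x y) (c0dist y z).
Proof.
apply: c0d_le; first by rewrite le_max c0d_ge0.
move=> a; have -> : proj1_sig x a - proj1_sig z a =
  (proj1_sig x a - proj1_sig y a) + (proj1_sig y a - proj1_sig z a).
  by rewrite addrA subrK.
by apply: (vD_le hv); rewrite le_max c0d_ge ?orbT.
Qed.
End C0.


Section Embed.
Context (R : realType) (L : fieldType) (v : L -> R).
Hypothesis hv : nonarch_abs v.
Context (p : L).
Hypothesis t0 : 0 < v p.
Hypothesis t1 : v p < 1.
Context (X : Type) (rho : X -> X -> R).
Hypothesis hu : ultrametric rho.
Context (Bm : set (set X)).
Hypothesis hB : mbase rho Bm.
Context (x0 : X).

Let t := v p.
Let A := set_type Bm.
Definition femb (x : X) : c0 v A :=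
  exist _ (fun a : A => coord v p rho Bm x0 x (val a)) (coord_c0 hv t0 t1 hu hB x0 x).

Lemma femb_norm x : c0norm (femb x) <= 1.
Proof. by apply: sup_img_le => // a; apply: coord_le1. Qed.

Lemma femb_small x y N : rho x y < t ^+ N -> c0dist (femb x) (femb y) <= t ^+ N.+1.
Proof.
move=> h; apply: c0d_le; first by rewrite exprn_ge0 // ltW.
by move=> a; apply: (coord_small hv t0 t1 hu).
Qed.

Lemma femb_big x y N : c0dist (femb x) (femb y) < t ^+ N -> rho x y < t ^+ N.
Proof.
move=> h; rewrite ltNge; apply/negP => /(coord_sep hv t0 t1 hu hB x0) [b [Bb hb]].
have := c0d_ge hv (femb x) (femb y) (exist _ b (mem_set Bb)).
rewrite /= => h2; have := le_lt_trans (le_trans hb h2) h.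
by rewrite ltxx.
Qed.

Lemma femb_unif : unif_continuous rho (@c0dist R L v A) femb.
Proof.
move=> e e0; have [N hN] := tsmall t0 t1 e0.
exists (t ^+ N); split; first by rewrite exprn_gt0.
move=> x y /femb_small h; apply: le_lt_trans h _.
by apply: le_lt_trans hN; apply: (tle t0 t1).
Qed.

Lemma femb_emb : membedding rho (@c0dist R L v A) femb.
Proof.
split.
- move=> x y E; apply: (rho_eq0 hu); apply/le_anti; rewrite rho_ge0 // andbT.
  rewrite leNgt; apply/negP => /(tsmall t0 t1) [N hN].
  have : rho x y < t ^+ N by apply: femb_big; rewrite E c0d_xx // exprn_gt0.
  by move=> h; have := lt_trans h hN; rewrite ltxx.
- move=> V hV x Vx; have [e [e0 he]] := hV _ Vx.
  have [N hN] := tsmall t0 t1 e0.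
  exists (t ^+ N); split; first by rewrite exprn_gt0.
  move=> y /femb_small h; apply: he; apply: le_lt_trans h _.
  by apply: le_lt_trans hN; apply: (tle t0 t1).
- move=> U hU.
  exists [set w | exists x, U x /\ exists N, ball rho x (t ^+ N) `<=` U /\
                                         c0dist (femb x) w < t ^+ N].
  split.
  + move=> w [x [Ux [N [bU hw]]]]; exists (t ^+ N); split; first by rewrite exprn_gt0.
    move=> w' hw'; exists x; split => //; exists N; split => //.
    by apply: le_lt_trans (c0d_ultra hv _ w _) _; rewrite gt_max hw hw'.
  + apply/seteqP; split.
    * move=> _ [x Ux <-]; split; last by exists x.
      have [e [e0 he]] := hU _ Ux; have [N hN] := tsmall t0 t1 e0.
      exists x; split => //; exists N; split; last by rewrite c0d_xx // exprn_gt0.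
      by move=> z hz; apply: he; apply: lt_trans hN.
    * move=> w [[x [Ux [N [bU hw]]]] [y _ yw]]; subst w.
      by exists y => //; apply: bU; apply: femb_big.
Qed.
End Embed.


Lemma inj_le (T U : Type) (A : set T) (B : set U) (g : T -> U) :
  (forall x, A x -> B (g x)) ->
  (forall x y, A x -> A y -> g x = g y -> x = y) -> (A #<= B)%card.
Proof.
move=> hf hi.
have : $|{injfun A >-> B}|.
  apply/injfunPex; exists g; first by move=> x; apply: hf.
  by move=> x y /set_mem Ax /set_mem Ay; apply: hi.
by case=> f; apply: inj_card_le.
Qed.

Section MinCard.
Context (U : Type) (Fam : set (set U)) (S1 : set U).
Hypothesis hS1 : Fam S1.

Let T := (set U * U * U)%type.
Definition PZ (G : set T) : Prop :=
  [/\ forall B p q, G (B, p, q) -> [/\ Fam B, S1 p & B q],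
      forall B p q q', G (B, p, q) -> G (B, p, q') -> q = q',
      forall B p p' q, G (B, p, q) -> G (B, p', q) -> p = p' &
      forall B B' p q, G (B, p, q) -> Fam B' -> exists q', G (B', p, q')].

Lemma PZ_chain (F : set (set T)) : F `<=` PZ -> total_on F subset ->
  PZ (\bigcup_(G in F) G).
Proof.
move=> FP tot; split.
- by move=> B p q [G FG hG]; case: (FP _ FG) => h _ _ _; apply: h.
- move=> B p q q' [G1 F1 h1] [G2 F2 h2].
  case: (tot _ _ F1 F2) => s.
  + by case: (FP _ F2) => _ h _ _; apply: h (s _ h1) h2.
  + by case: (FP _ F1) => _ h _ _; apply: h h1 (s _ h2).
- move=> B p p' q [G1 F1 h1] [G2 F2 h2].
  case: (tot _ _ F1 F2) => s.
  + by case: (FP _ F2) => _ _ h _; apply: h (s _ h1) h2.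
  + by case: (FP _ F1) => _ _ h _; apply: h h1 (s _ h2).
- move=> B B' p q [G FG hG] FB'.
  case: (FP _ FG) => _ _ _ /(_ _ _ _ _ hG FB') [q' hq'].
  by exists q'; exists G.
Qed.

Lemma min_card : exists Bm, Fam Bm /\ forall B, Fam B -> (Bm #<= B)%card.
Proof.
have [G [PG maxG]] := Zorn_bigcup PZ_chain.
case: PG => Pi Pf Pj Pd.
case: (pselect (exists B, Fam B /\ forall q, B q -> exists p, G (B, p, q))).
  move=> [B [FB surj]]; exists B; split => // B' FB'.
  have [g gP] : {g : U -> U & forall q, B q -> exists p, G (B, p, q) /\ G (B', p, g q)}.
    apply: (choice (P := fun q y => B q -> exists p, G (B, p, q) /\ G (B', p, y))) => q.
    case: (pselect (B q)) => [Bq|nBq]; last by exists q.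
    have [p hp] := surj _ Bq; have [q' hq'] := Pd _ _ _ _ hp FB'.
    by exists q' => _; exists p.
  apply: (inj_le (g := g)).
  - by move=> q Bq; have [p [_ h]] := gP _ Bq; case: (Pi _ _ _ h).
  - move=> q1 q2 B1 B2 E.
    have [p1 [h1 h1']] := gP _ B1; have [p2 [h2 h2']] := gP _ B2.
    rewrite E in h1'; have e := Pj _ _ _ _ h1' h2'.
    by rewrite e in h1; apply: Pf h1 h2.
move=> nsurj.
case: (pselect (forall p, S1 p -> exists q, G (S1, p, q))) => [dom|ndom].
  exists S1; split => // B FB.
  have [g gP] : {g : U -> U & forall p, S1 p -> G (B, p, g p)}.
    apply: (choice (P := fun p y => S1 p -> G (B, p, y))) => p.
    case: (pselect (S1 p)) => [Sp|nSp]; last by exists p.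
    have [q hq] := dom _ Sp; have [q' hq'] := Pd _ _ _ _ hq FB.
    by exists q'.
  apply: (inj_le (g := g)).
  - by move=> p Sp; case: (Pi _ _ _ (gP _ Sp)).
  - move=> p1 p2 S1p1 S1p2 E; have h1 := gP _ S1p1; have h2 := gP _ S1p2.
    by rewrite E in h1; apply: Pj h1 h2.
exfalso.
have [p0 [Sp0 np0]] : exists p0, S1 p0 /\ ~ exists q, G (S1, p0, q).
  case: (pselect (exists p0, S1 p0 /\ ~ exists q, G (S1, p0, q))) => // h.
  exfalso; apply: ndom => p Sp.
  case: (pselect (exists q, G (S1, p, q))) => // nq.
  by exfalso; apply: h; exists p.
have [qB qBP] : {qB : set U -> U & forall B, Fam B -> B (qB B) /\ ~ exists p, G (B, p, qB B)}.
  apply: (choice (P := fun B y => Fam B -> B y /\ ~ exists p, G (B, p, y))) => B.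
  case: (pselect (Fam B)) => [FB|nFB]; last by exists p0.
  case: (pselect (exists q, B q /\ ~ exists p, G (B, p, q))) => [[q hq]|h].
    by exists q.
  exfalso; apply: nsurj; exists B; split => // q Bq.
  case: (pselect (exists p, G (B, p, q))) => // np.
  by exfalso; apply: h; exists q.
pose G' := G `|` [set tr | exists B, Fam B /\ tr = (B, p0, qB B)].
apply: (maxG G').
  split; first by move=> tr Gtr; left.
  move=> sub; have : G' (S1, p0, qB S1) by right; exists S1.
  by move=> /sub h; apply: np0; exists (qB S1).
have newP : forall B p q, G' (B, p, q) -> ~ G (B, p, q) -> [/\ Fam B, p = p0 & q = qB B].
  move=> B p q [//|[B0 [FB0 [-> -> ->]]]] _; by [].
have oldp : forall B q, ~ G (B, p0, q).
  move=> B q h; case: (Pi _ _ _ h) => FB _ _.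
  by have [q' hq'] := Pd _ _ _ _ h hS1; apply: np0; exists q'.
split.
- move=> B p q h; case: (pselect (G (B, p, q))) => [g|ng]; first exact: Pi.
  have [FB -> ->] := newP _ _ _ h ng; split => //; exact: (qBP B FB).1.
- move=> B p q q' h h'.
  case: (pselect (G (B, p, q))) => [g|ng]; case: (pselect (G (B, p, q'))) => [g'|ng'].
  + exact: Pf g g'.
  + by have [_ e _] := newP _ _ _ h' ng'; rewrite e in g; case: (oldp _ _ g).
  + by have [_ e _] := newP _ _ _ h ng; rewrite e in g'; case: (oldp _ _ g').
  + by have [_ _ ->] := newP _ _ _ h ng; have [_ _ ->] := newP _ _ _ h' ng'.
- move=> B p p' q h h'.
  case: (pselect (G (B, p, q))) => [g|ng]; case: (pselect (G (B, p', q))) => [g'|ng'].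
  + exact: Pj g g'.
  + have [FB _ e] := newP _ _ _ h' ng'; rewrite e in g.
    by case: (qBP B FB) => _ H; exfalso; apply: H; exists p.
  + have [FB _ e] := newP _ _ _ h ng; rewrite e in g'.
    by case: (qBP B FB) => _ H; exfalso; apply: H; exists p'.
  + by have [_ -> _] := newP _ _ _ h ng; have [_ -> _] := newP _ _ _ h' ng'.
- move=> B B' p q h FB'.
  case: (pselect (G (B, p, q))) => [g|ng].
    by have [q' hq'] := Pd _ _ _ _ g FB'; exists q'; left.
  have [_ -> _] := newP _ _ _ h ng.
  by exists (qB B'); right; exists B'.
Qed.
End MinCard.


Unset Implicit Arguments. Set Strict Implicit.
Theorem theorem2p4 (R : realType) (L : fieldType) (v : L -> R) :
  nonarch_abs v ->
  ~ mdiscrete (absdist v) ->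
  mlocally_compact (absdist v) ->
  forall (X : Type) (rho : X -> X -> R), ultrametric rho ->
  exists A : Type,
    weight_card rho A /\
    (exists f : X -> c0 v A,
        (forall x, c0norm (f x) <= 1) /\ membedding rho (@c0dist R L v A) f) /\
    (exists g : X -> c0 v A,
        unif_continuous rho (@c0dist R L v A) g /\
        membedding rho (@c0dist R L v A) g).
Proof.
move=> hv nd _ X rho hu.
have hB1 : mbase rho (mopen rho).
  split; first by move=> b. by move=> U hU x Ux; exists U; split.
have [Bm [hB minB]] := min_card hB1.
exists (set_type Bm); split.
  split; first by exists Bm; split => //; exact: card_setT.
  by move=> B hBB; rewrite (card_le_eql (card_setT Bm)); apply: minB.
have [p [t0 t1]] : exists p : L, 0 < v p /\ v p < 1.
  case: (pselect (exists p : L, 0 < v p /\ v p < 1)) => // np; exfalso.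
  apply: nd => x y yx; exists 1; split => // z hz.
  case: (pselect (z = x)) => // nzx; exfalso; apply: np.
  exists (x - z); split; last by rewrite -yx.
  rewrite lt_neqAle (v_ge0 hv) andbT.
  apply/eqP => /esym /(v_eq0 hv) /eqP; rewrite subr_eq0 => /eqP e.
  by apply: nzx.
case: (pselect (exists x : X, True)) => [[x0 _]|nX].
  have hf := femb_emb hv t0 t1 hu hB x0.
  split; exists (femb hv t0 t1 hu hB x0); split => //.
  - by move=> x; apply: femb_norm.
  - exact: femb_unif.
have F : X -> c0 v (set_type Bm) by move=> x; exfalso; apply: nX; exists x.
have memb : membedding rho (@c0dist R L v (set_type Bm)) F.
  split.
  - by move=> x; exfalso; apply: nX; exists x.
  - by move=> V _ x; exfalso; apply: nX; exists x.
  - move=> U _; exists set0; split; first by move=> w [].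
    by apply/seteqP; split => w; [case=> x _ _; exfalso; apply: nX; exists x | case].
split; exists F; split => //.
- by move=> x; exfalso; apply: nX; exists x.
- by move=> e e0; exists 1; split => // x; exfalso; apply: nX; exists x.

Qed.
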